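(* Let $\alpha,\beta,\gamma\in\mathbb{F}\setminus\{\frac12\}$, and let $\mathbf{A}$ be the 5-dimensional LV algebra with natural basis $e_1,\dots,e_5$ in which $e_1e_2=\alpha e_1+(1-\alpha)e_2$, $e_1e_5=\gamma e_1+(1-\gamma)e_5$, $e_2e_5=\beta e_2+(1-\beta)e_5$, and $e_ie_j=\frac12(e_i+e_j)$ for all other pairs $i,j$. Then $\mathrm{Der}(\mathbf{A})=\{f\in L(\mathbf{A}) : \mathrm{Im}(f)\subseteq\langle e_3-e_4\rangle \text{ and } f(e_1)=f(e_2)=f(e_5)\}$.
   Context: Let $\mathbb{F}$ be a field of characteristic different from $2$. A Lotka–Volterra (LV) algebra of dimension $5$ over $\mathbb{F}$ is a commutative (not necessarily associative) $\mathbb{F}$-algebra $\mathbf{A}$ with a basis $e_1,\dots,e_5$ (the natural basis) such that $e_ie_j=\alpha_{ij}e_i+\alpha_{ji}e_j$ with $\alpha_{ij}\in\mathbb{F}$, $\alpha_{ii}=\frac12$ and $\alpha_{ij}+\alpha_{ji}=1$ for all $i,j$. A derivation is a linear map $D:\mathbf{A}\to\mathbf{A}$ with $D(uv)=D(u)v+uD(v)$ for all $u,v$; $\mathrm{Der}(\mathbf{A})$ is the set of derivations, $L(\mathbf{A})$ the set of linear maps $\mathbf{A}\to\mathbf{A}$, and $\langle x_1,\dots,x_k\rangle$ the linear span. *)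

(* Defs.v *)
From HB Require Import structures.
From mathcomp Require Import all_boot all_order all_algebra.
Set Implicit Arguments. Unset Strict Implicit. Unset Printing Implicit Defensive.
Import Order.TTheory GRing.Theory Num.Theory.
Local Open Scope ring_scope.

(* Vectors of the 5-dimensional algebra are row vectors 'rV[F]_5;
   the natural basis e_1..e_5 is e 0 .. e 4 (0-indexed). *)
Definition e {F : fieldType} (i : 'I_5) : 'rV[F]_5 := delta_mx 0 i.

Definition lvmul {F : fieldType} (a : 'M[F]_5) (u v : 'rV[F]_5) : 'rV[F]_5 :=
  \sum_(i < 5) \sum_(j < 5) (u 0 i * v 0 j) *: (a i j *: e i + a j i *: e j).

Definition is_LV {F : fieldType} (a : 'M[F]_5) : Prop :=
  (forall i, a i i = 2%:R^-1) /\ (forall i j, a i j + a j i = 1).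

(* Linear maps A -> A are represented by matrices acting on the right: f(u) = u *m D. *)
Definition is_derivation {F : fieldType} (a : 'M[F]_5) (D : 'M[F]_5) : Prop :=
  forall u v : 'rV[F]_5,
    lvmul a u v *m D = lvmul a (u *m D) v + lvmul a u (v *m D).

(* Structure constants of the algebra of the theorem (indices 0,1,4 = e_1,e_2,e_5). *)
Definition thm6_mx {F : fieldType} (alpha beta gamma : F) : 'M[F]_5 :=
  \matrix_(i < 5, j < 5)
    if (val i == 0%N) && (val j == 1%N) then alpha
    else if (val i == 1%N) && (val j == 0%N) then 1 - alpha
    else if (val i == 0%N) && (val j == 4%N) then gamma
    else if (val i == 4%N) && (val j == 0%N) then 1 - gamma
    else if (val i == 1%N) && (val j == 4%N) then beta
    else if (val i == 4%N) && (val j == 1%N) then 1 - beta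
    else 2%:R^-1.

(* Main.v *)
Require Import Defs.
From HB Require Import structures.
From mathcomp Require Import all_boot all_order all_algebra ring.
Import GRing.Theory.
Local Open Scope ring_scope.

Lemma lvmulE (F : fieldType) (a : 'M[F]_5) u v k :
  lvmul a u v 0 k = u 0 k * (\sum_j a k j * v 0 j) + v 0 k * (\sum_i a k i * u 0 i).
Proof.
rewrite /lvmul summxE.
under eq_bigr => i _ do rewrite summxE.
under eq_bigr => i _ do under eq_bigr => j _ do rewrite !mxE eqxx /= mulrDr.
under eq_bigr => i _ do rewrite big_split /=.
rewrite big_split /=; congr (_ + _).
  rewrite (bigD1 k) //= addrC big1 ?add0r; last first.
    move=> i ik; apply: big1 => j _; rewrite eq_sym (negbTE ik) mulr0 mulr0 //.
  rewrite big_distrr /=; apply: eq_bigr => j _; rewrite eqxx mulr1; ring.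
rewrite exchange_big /= (bigD1 k) //= addrC big1 ?add0r; last first.
  move=> i ik; apply: big1 => j _; rewrite eq_sym (negbTE ik) mulr0 mulr0 //.
rewrite big_distrr /=; apply: eq_bigr => j _; rewrite eqxx mulr1; ring.
Qed.

Lemma sum5 (F : fieldType) (G : 'I_5 -> F) :
  \sum_(i < 5) G i = G (inord 0) + G (inord 1) + G (inord 2) + G (inord 3) + G (inord 4).
Proof.
rewrite !big_ord_recr big_ord0 /= add0r.
by repeat congr (_ + _); congr G; apply: val_inj; rewrite /= inordK.
Qed.

Lemma ord5 (P : 'I_5 -> Prop) :
  P (inord 0) -> P (inord 1) -> P (inord 2) -> P (inord 3) -> P (inord 4) -> forall k, P k.
Proof.
move=> P0 P1 P2 P3 P4 k; rewrite -(inord_val k).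
case: k => m Hk /=.
do 5 (case: m Hk => [|m] Hk; first by []).
by [].
Qed.

Lemma eq_inord5 i k : (i < 5)%N -> (k < 5)%N -> (inord i == inord k :> 'I_5) = (i == k).
Proof.
move=> hi hk; apply/eqP/eqP => [h|->//].
by have := congr1 val h; rewrite /= !inordK.
Qed.

Lemma eE (F : fieldType) i k : (i < 5)%N -> (k < 5)%N ->
  (e (inord i) : 'rV[F]_5) 0 (inord k) = (i == k)%:R.
Proof. by move=> hi hk; rewrite /e mxE /= eq_inord5 // eq_sym. Qed.

Lemma thmE (F : fieldType) (al be ga : F) i j : (i < 5)%N -> (j < 5)%N ->
  thm6_mx al be ga (inord i) (inord j) =
    if (i == 0%N) && (j == 1%N) then al
    else if (i == 1%N) && (j == 0%N) then 1 - al
    else if (i == 0%N) && (j == 4%N) then ga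
    else if (i == 4%N) && (j == 0%N) then 1 - ga
    else if (i == 1%N) && (j == 4%N) then be
    else if (i == 4%N) && (j == 1%N) then 1 - be
    else 2%:R^-1.
Proof.
move=> hi hj; rewrite mxE.
have -> : \val (inord i : 'I_5) = i by exact: inordK.
have -> : \val (inord j : 'I_5) = j by exact: inordK.
by [].
Qed.

Lemma rowmulE (F : fieldType) (u : 'rV[F]_5) (D : 'M[F]_5) k :
  (u *m D) 0 k = \sum_j u 0 j * D j k.
Proof. by rewrite mxE. Qed.
Lemma addE (F : fieldType) (A B : 'rV[F]_5) k : (A + B) 0 k = A 0 k + B 0 k.
Proof. by rewrite mxE. Qed.
Lemma subE (F : fieldType) (A : 'rV[F]_5) k : (- A) 0 k = - A 0 k.
Proof. by rewrite !mxE. Qed.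
Lemma scaleE (F : fieldType) c (A : 'rV[F]_5) k : (c *: A) 0 k = c * A 0 k.
Proof. by rewrite !mxE. Qed.

Ltac simp := rewrite ?scaleE ?addE ?subE ?rowmulE ?sum5 ?lvmulE ?sum5 ?rowmulE ?sum5 ?eE // ?thmE //= ?mul0r ?mulr0 ?mul1r ?mulr1 ?add0r ?addr0 ?subr0 ?sub0r.

Lemma solve1 {F : fieldType} (c x L R k : F) : c != 0 -> L = R -> c * x = k * (L - R) -> x = 0.
Proof.
move=> hc hLR h; rewrite hLR subrr mulr0 in h; move/eqP: h.
by rewrite mulf_eq0 (negbTE hc) => /eqP.
Qed.

Lemma solve2 {F : fieldType} (c x L1 R1 L2 R2 k1 k2 : F) : c != 0 -> L1 = R1 -> L2 = R2 ->
  c * x = k1 * (L1 - R1) + k2 * (L2 - R2) -> x = 0.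
Proof.
move=> hc h1 h2 h; rewrite h1 h2 !subrr !mulr0 addr0 in h; move/eqP: h.
by rewrite mulf_eq0 (negbTE hc) => /eqP.
Qed.

Lemma cnz {F : fieldType} (a : F) : (2%:R : F) != 0 -> a != 2%:R^-1 -> 1 - 2%:R * a != 0.
Proof.
move=> h2 ha; apply: contra ha => /eqP h; apply/eqP.
have h' : 2%:R * a = 1 by apply/eqP; rewrite eq_sym -subr_eq0 h.
by rewrite -(mulKf h2 a) h' mulr1.
Qed.

Ltac simpin h := move: h; simp => h.
Ltac step E c k i j l := let h := fresh "h" in have h := E i j l; simpin h; apply: (@solve1 _ c _ _ _ k _ h); [done | field; done].

Lemma fwd (F : fieldType) (hchar : (2%:R : F) != 0)
    (alpha beta gamma : F)
    (ha : alpha != 2%:R^-1) (hb : beta != 2%:R^-1) (hg : gamma != 2%:R^-1)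
    (D : 'M[F]_5) :
  is_derivation (thm6_mx alpha beta gamma) D ->
  ((forall u : 'rV[F]_5, exists c : F,
       u *m D = c *: (e (inord 2) - e (inord 3))) /\
   e (inord 0) *m D = e (inord 1) *m D /\
   e (inord 1) *m D = e (inord 4) *m D).
Proof.
move=> H.
have E := fun i j k => congr1 (fun M : 'M[F]_(1,5) => M 0 (inord k)) (H (e (inord i)) (e (inord j))).
have ca := cnz alpha hchar ha; have cb := cnz beta hchar hb; have cg := cnz gamma hchar hg.
have c1 : (1 : F) != 0 := oner_neq0 F.
have d01 : D (inord 0) (inord 1) = 0.
  have h := E 0%N 0%N 1%N; simpin h;
  apply: (@solve1 _ (1 - 2%:R * alpha : F) _ _ _ (-1 : F) _ h); [done | field; done].
have d04 : D (inord 0) (inord 4) = 0.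
  have h := E 0%N 0%N 4%N; simpin h;
  apply: (@solve1 _ (1 - 2%:R * gamma : F) _ _ _ (-1 : F) _ h); [done | field; done].
have d10 : D (inord 1) (inord 0) = 0.
  have h := E 1%N 1%N 0%N; simpin h;
  apply: (@solve1 _ (1 - 2%:R * alpha : F) _ _ _ (1 : F) _ h); [done | field; done].
have d14 : D (inord 1) (inord 4) = 0.
  have h := E 1%N 1%N 4%N; simpin h;
  apply: (@solve1 _ (1 - 2%:R * beta : F) _ _ _ (-1 : F) _ h); [done | field; done].
have d40 : D (inord 4) (inord 0) = 0.
  have h := E 4%N 4%N 0%N; simpin h;
  apply: (@solve1 _ (1 - 2%:R * gamma : F) _ _ _ (1 : F) _ h); [done | field; done].
have d41 : D (inord 4) (inord 1) = 0.
  have h := E 4%N 4%N 1%N; simpin h;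
  apply: (@solve1 _ (1 - 2%:R * beta : F) _ _ _ (1 : F) _ h); [done | field; done].
have d21 : D (inord 2) (inord 1) = 0.
  have h := E 0%N 2%N 1%N; simpin h; rewrite ?d01 in h;
  apply: (@solve1 _ (1 - 2%:R * alpha : F) _ _ _ (-2 : F) _ h); [done | field; done].
have d24 : D (inord 2) (inord 4) = 0.
  have h := E 0%N 2%N 4%N; simpin h; rewrite ?d04 in h;
  apply: (@solve1 _ (1 - 2%:R * gamma : F) _ _ _ (-2 : F) _ h); [done | field; done].
have d20 : D (inord 2) (inord 0) = 0.
  have h := E 1%N 2%N 0%N; simpin h; rewrite ?d10 in h;
  apply: (@solve1 _ (1 - 2%:R * alpha : F) _ _ _ (2 : F) _ h); [done | field; done].
have d31 : D (inord 3) (inord 1) = 0.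
  have h := E 0%N 3%N 1%N; simpin h; rewrite ?d01 in h;
  apply: (@solve1 _ (1 - 2%:R * alpha : F) _ _ _ (-2 : F) _ h); [done | field; done].
have d34 : D (inord 3) (inord 4) = 0.
  have h := E 0%N 3%N 4%N; simpin h; rewrite ?d04 in h;
  apply: (@solve1 _ (1 - 2%:R * gamma : F) _ _ _ (-2 : F) _ h); [done | field; done].
have d30 : D (inord 3) (inord 0) = 0.
  have h := E 1%N 3%N 0%N; simpin h; rewrite ?d10 in h;
  apply: (@solve1 _ (1 - 2%:R * alpha : F) _ _ _ (2 : F) _ h); [done | field; done].
have f12_ : D (inord 1) (inord 2) - D (inord 0) (inord 2) = 0.
  have h := E 0%N 1%N 2%N; simpin h; rewrite ?d01 in h;
  apply: (@solve1 _ (1 - 2%:R * alpha : F) _ _ _ (2 : F) _ h); [done | field; done].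
have f12 : D (inord 1) (inord 2) = D (inord 0) (inord 2).
  by move/eqP: f12_; rewrite subr_eq0 => /eqP.
have f13_ : D (inord 1) (inord 3) - D (inord 0) (inord 3) = 0.
  have h := E 0%N 1%N 3%N; simpin h; rewrite ?d01 in h;
  apply: (@solve1 _ (1 - 2%:R * alpha : F) _ _ _ (2 : F) _ h); [done | field; done].
have f13 : D (inord 1) (inord 3) = D (inord 0) (inord 3).
  by move/eqP: f13_; rewrite subr_eq0 => /eqP.
have f42_ : D (inord 4) (inord 2) - D (inord 0) (inord 2) = 0.
  have h := E 0%N 4%N 2%N; simpin h; rewrite ?d04 in h;
  apply: (@solve1 _ (1 - 2%:R * gamma : F) _ _ _ (2 : F) _ h); [done | field; done].
have f42 : D (inord 4) (inord 2) = D (inord 0) (inord 2).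
  by move/eqP: f42_; rewrite subr_eq0 => /eqP.
have f43_ : D (inord 4) (inord 3) - D (inord 0) (inord 3) = 0.
  have h := E 0%N 4%N 3%N; simpin h; rewrite ?d04 in h;
  apply: (@solve1 _ (1 - 2%:R * gamma : F) _ _ _ (2 : F) _ h); [done | field; done].
have f43 : D (inord 4) (inord 3) = D (inord 0) (inord 3).
  by move/eqP: f43_; rewrite subr_eq0 => /eqP.
have d11 : D (inord 1) (inord 1) = 0.
  have h1 := E 0%N 1%N 0%N; simpin h1; rewrite ?d10 ?d14 ?f12 ?f13 in h1.
  have h2 := E 1%N 1%N 1%N; simpin h2; rewrite ?d10 ?d14 ?f12 ?f13 in h2.
  apply: (@solve2 _ (1 - 2%:R * alpha : F) _ _ _ _ _ (2 : F) (-1 : F) _ h1 h2); [done | field; done].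
have f03_ : D (inord 0) (inord 3) + D (inord 0) (inord 2) = 0.
  have h := E 1%N 1%N 1%N; simpin h; rewrite ?d10 ?d14 ?d11 ?f12 ?f13 in h;
  apply: (@solve1 _ (1:F) _ _ _ (-1 : F) _ h); [done | field; done].
have f03 : D (inord 0) (inord 3) = - D (inord 0) (inord 2).
  by move/eqP: f03_; rewrite addr_eq0 => /eqP.
have d00 : D (inord 0) (inord 0) = 0.
  have h := E 0%N 0%N 0%N; simpin h; rewrite ?d01 ?d04 ?f03 in h;
  apply: (@solve1 _ (1:F) _ _ _ (-1 : F) _ h); [done | field; done].
have d44 : D (inord 4) (inord 4) = 0.
  have h := E 4%N 4%N 4%N; simpin h; rewrite ?d40 ?d41 ?f42 ?f43 ?f03 in h;
  apply: (@solve1 _ (1:F) _ _ _ (-1 : F) _ h); [done | field; done].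
have f23_ : D (inord 2) (inord 3) + D (inord 2) (inord 2) = 0.
  have h := E 2%N 2%N 2%N; simpin h; rewrite ?d20 ?d21 ?d24 in h;
  apply: (@solve1 _ (1:F) _ _ _ (-1 : F) _ h); [done | field; done].
have f23 : D (inord 2) (inord 3) = - D (inord 2) (inord 2).
  by move/eqP: f23_; rewrite addr_eq0 => /eqP.
have f33_ : D (inord 3) (inord 3) + D (inord 3) (inord 2) = 0.
  have h := E 3%N 3%N 3%N; simpin h; rewrite ?d30 ?d31 ?d34 in h;
  apply: (@solve1 _ (1:F) _ _ _ (-1 : F) _ h); [done | field; done].
have f33 : D (inord 3) (inord 3) = - D (inord 3) (inord 2).
  by move/eqP: f33_; rewrite addr_eq0 => /eqP.
split.
  move=> u; exists (u 0 (inord 0)*D (inord 0) (inord 2) + u 0 (inord 1)*D (inord 0) (inord 2) + u 0 (inord 2)*D (inord 2) (inord 2) + u 0 (inord 3)*D (inord 3) (inord 2) + u 0 (inord 4)*D (inord 0) (inord 2)).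
  by apply/rowP; apply: ord5; simp; rewrite ?d01 ?d04 ?d10 ?d14 ?d40 ?d41 ?d21 ?d24 ?d20 ?d31 ?d34 ?d30 ?d11 ?d00 ?d44 ?f13 ?f43 ?f12 ?f42 ?f03 ?f23 ?f33; ring.
split.
  by apply/rowP; apply: ord5; simp; rewrite ?d01 ?d04 ?d10 ?d14 ?d40 ?d41 ?d21 ?d24 ?d20 ?d31 ?d34 ?d30 ?d11 ?d00 ?d44 ?f13 ?f43 ?f12 ?f42 ?f03 ?f23 ?f33.
by apply/rowP; apply: ord5; simp; rewrite ?d01 ?d04 ?d10 ?d14 ?d40 ?d41 ?d21 ?d24 ?d20 ?d31 ?d34 ?d30 ?d11 ?d00 ?d44 ?f13 ?f43 ?f12 ?f42 ?f03 ?f23 ?f33.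
Qed.

Lemma bwd (F : fieldType) (hchar : (2%:R : F) != 0)
    (alpha beta gamma : F) (D : 'M[F]_5) :
  ((forall u : 'rV[F]_5, exists c : F,
       u *m D = c *: (e (inord 2) - e (inord 3))) /\
   e (inord 0) *m D = e (inord 1) *m D /\
   e (inord 1) *m D = e (inord 4) *m D) ->
  is_derivation (thm6_mx alpha beta gamma) D.
Proof.
move=> [hU [h01 h14]].
have row p : (p < 5)%N -> exists c, forall q, (q < 5)%N ->
    D (inord p) (inord q) = c * ((2 == q)%:R - (3 == q)%:R).
  move=> hp; case: (hU (e (inord p))) => c hc; exists c => q hq.
  have := congr1 (fun M : 'M[F]_(1,5) => M 0 (inord q)) hc.
  simp.
  by case: p {hc} hp => [|[|[|[|[|p]]]]] //= _; rewrite ?mul0r ?mul1r ?add0r ?addr0.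
have [c0 r0] := row 0%N isT.
have [c1 r1] := row 1%N isT.
have [c2 r2] := row 2%N isT.
have [c3 r3] := row 3%N isT.
have [c4 r4] := row 4%N isT.
have e10 : c1 = c0.
  have := congr1 (fun M : 'M[F]_(1,5) => M 0 (inord 2)) h01; simp.
  by rewrite r0 // r1 //= !subr0 !mulr1.
have e41 : c4 = c1.
  have := congr1 (fun M : 'M[F]_(1,5) => M 0 (inord 2)) h14; simp.
  by rewrite r1 // r4 //= !subr0 !mulr1.
move=> u v; apply/rowP; apply: ord5; simp;
  rewrite ?r0 // ?r1 // ?r2 // ?r3 // ?r4 //= e41 e10; field; done.
Qed.

Theorem mainTheorem6 (F : fieldType) (hchar : (2%:R : F) != 0)
    (alpha beta gamma : F)
    (ha : alpha != 2%:R^-1) (hb : beta != 2%:R^-1) (hg : gamma != 2%:R^-1)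
    (D : 'M[F]_5) :
  is_derivation (thm6_mx alpha beta gamma) D <->
  ((forall u : 'rV[F]_5, exists c : F,
       u *m D = c *: (e (inord 2) - e (inord 3))) /\
   e (inord 0) *m D = e (inord 1) *m D /\
   e (inord 1) *m D = e (inord 4) *m D).
Proof.
split; [exact: fwd | exact: bwd].
Qed.
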